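(* Let $H$ be a weak Hopf algebra and $A$ a symmetric partial $H$-module algebra. Then the map $\pi\colon H\to\mathrm{End}_\Bbbk(A)$ given by $\pi(h)(a)=h\cdot a$ is a partial representation of $H$ in the algebra $\mathrm{End}_\Bbbk(A)$.
   Context: All algebras are associative and unital over a field $\Bbbk$; Sweedler notation $\Delta(h)=h_1\otimes h_2$, $\Delta(1_H)=1_1\otimes1_2$. A weak Hopf algebra is $(H,m,u,\Delta,\varepsilon,S)$ with $H$ an algebra, $(H,\Delta,\varepsilon)$ a coalgebra, and for all $g,h,k$: $\Delta(kh)=\Delta(k)\Delta(h)$; $\varepsilon(kh_1)\varepsilon(h_2g)=\varepsilon(khg)=\varepsilon(kh_2)\varepsilon(h_1g)$; $(1\otimes\Delta(1))(\Delta(1)\otimes1)=\Delta^2(1)=(\Delta(1)\otimes1)(1\otimes\Delta(1))$; $h_1S(h_2)=\varepsilon(1_1h)1_2$; $S(h_1)h_2=1_1\varepsilon(h1_2)$; $S(h)=S(h_1)h_2S(h_3)$. Symmetric partial $H$-module algebra: algebra $A$ with linear $h\otimes a\mapsto h\cdot a$ such that $h\cdot(ab)=(h_1\cdot a)(h_2\cdot b)$, $1_H\cdot a=a$, $h\cdot(k\cdot a)=(h_1\cdot1_A)((h_2k)\cdot a)$ and $h\cdot(k\cdot a)=((h_1k)\cdot a)(h_2\cdot1_A)$. A partial representation of $H$ in an algebra $B$ is a linear $\pi\colon H\to B$ with, for all $h,k$: (PR1) $\pi(1_H)=1_B$; (PR2) $\pi(h)\pi(k_1)\pi(S(k_2))=\pi(hk_1)\pi(S(k_2))$;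 (PR3) $\pi(h)\pi(S(k_1))\pi(k_2)=\pi(hS(k_1))\pi(k_2)$; (PR4) $\pi(h_1)\pi(S(h_2))\pi(k)=\pi(h_1)\pi(S(h_2)k)$; (PR5) $\pi(S(h_1))\pi(h_2)\pi(k)=\pi(S(h_1))\pi(h_2k)$; (PR6) $\pi(h)=\pi(h_1)\pi(S(h_2))\pi(h_3)$. *)

(* Defs.v *)
From HB Require Import structures.
From mathcomp Require Import all_boot all_order all_algebra.
Set Implicit Arguments. Unset Strict Implicit. Unset Printing Implicit Defensive.
Import GRing.Theory.
Local Open Scope ring_scope.

Section WeakHopf.
Variables (k : fieldType) (H : algType k).

(* An element of H (x) H is represented by a finite list of simple tensors
   [(a_i, b_i)], standing for sum_i a_i (x) b_i; similarly for H (x) H (x) H.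
   Two such representatives denote the same tensor iff every bilinear
   (resp. trilinear) form to k takes the same value on them (over a field,
   (H (x) H)^* = Bil(H x H, k) separates points). *)
Definition bilinear_form (f : H -> H -> k) :=
  (forall x, forall a y z, f x (a *: y + z) = a * f x y + f x z) /\
  (forall y, forall a x z, f (a *: x + z) y = a * f x y + f z y).

Definition trilinear_form (f : H -> H -> H -> k) :=
  (forall x y, forall a u v, f x y (a *: u + v) = a * f x y u + f x y v) /\
  (forall x z, forall a u v, f x (a *: u + v) z = a * f x u z + f x v z) /\
  (forall y z, forall a u v, f (a *: u + v) y z = a * f u y z + f v y z).

Definition teq2 (s t : seq (H * H)) : Prop :=
  forall f, bilinear_form f ->
    \sum_(p <- s) f p.1 p.2 = \sum_(p <- t) f p.1 p.2.

Definition teq3 (s t : seq (H * H * H)) : Prop :=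
  forall f, trilinear_form f ->
    \sum_(p <- s) f p.1.1 p.1.2 p.2 = \sum_(p <- t) f p.1.1 p.1.2 p.2.

Variable delta : H -> seq (H * H).

Definition delta3l (h : H) : seq (H * H * H) :=
  flatten [seq [seq (q.1, q.2, p.2) | q <- delta p.1] | p <- delta h].
Definition delta3r (h : H) : seq (H * H * H) :=
  flatten [seq [seq (p.1, q.1, q.2) | q <- delta p.2] | p <- delta h].

Definition is_weak_hopf (eps : H -> k) (S : H -> H) : Prop :=
  (forall a x y, teq2 (delta (a *: x + y))
       ([seq (a *: p.1, p.2) | p <- delta x] ++ delta y)) /\
  (forall a x y, eps (a *: x + y) = a * eps x + eps y) /\
  (forall a x y, S (a *: x + y) = a *: S x + S y) /\
  (forall h, teq3 (delta3l h) (delta3r h)) /\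
  (forall h, \sum_(p <- delta h) eps p.1 *: p.2 = h) /\
  (forall h, \sum_(p <- delta h) eps p.2 *: p.1 = h) /\
  (forall x y, teq2 (delta (x * y))
       [seq (p.1 * q.1, p.2 * q.2) | p <- delta x, q <- delta y]) /\
  (forall x h g, \sum_(p <- delta h) eps (x * p.1) * eps (p.2 * g) = eps (x * h * g)) /\
  (forall x h g, \sum_(p <- delta h) eps (x * p.2) * eps (p.1 * g) = eps (x * h * g)) /\
  (* weak comultiplicativity of the unit:
     (1 (x) Delta(1))(Delta(1) (x) 1) = Delta^2(1) = (Delta(1) (x) 1)(1 (x) Delta(1)) *)
  teq3 [seq (p.1, q.1 * p.2, q.2) | p <- delta 1, q <- delta 1] (delta3l 1) /\
  teq3 (delta3l 1) [seq (p.1, p.2 * q.1, q.2) | p <- delta 1, q <- delta 1] /\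
  (forall h, \sum_(p <- delta h) p.1 * S p.2
             = \sum_(q <- delta 1) eps (q.1 * h) *: q.2) /\
  (forall h, \sum_(p <- delta h) S p.1 * p.2
             = \sum_(q <- delta 1) eps (h * q.2) *: q.1) /\
  (forall h, S h = \sum_(p <- delta3l h) S p.1.1 * p.1.2 * S p.2).

Variable A : algType k.

Definition is_sym_partial_module_algebra (act : H -> A -> A) : Prop :=
  (forall a x y b, act (a *: x + y) b = a *: act x b + act y b) /\
  (forall h a b c, act h (a *: b + c) = a *: act h b + act h c) /\
  (forall h a b, act h (a * b) = \sum_(p <- delta h) act p.1 a * act p.2 b) /\
  (forall a, act 1 a = a) /\
  (forall h g a, act h (act g a) = \sum_(p <- delta h) act p.1 1 * act (p.2 * g) a) /\
  (forall h g a, act h (act g a) = \sum_(p <- delta h) act (p.1 * g) a * act p.2 1).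

(* Elements of End_k(A) are k-linear maps A -> A, product = composition,
   unit = identity; equalities in End_k(A) are checked pointwise. *)
Definition is_partial_rep_End (S : H -> H) (pi : H -> A -> A) : Prop :=
  (forall h a b c, pi h (a *: b + c) = a *: pi h b + pi h c) /\
  (forall a x y b, pi (a *: x + y) b = a *: pi x b + pi y b) /\
  (forall b, pi 1 b = b) /\
  (forall h g b, \sum_(p <- delta g) pi h (pi p.1 (pi (S p.2) b))
               = \sum_(p <- delta g) pi (h * p.1) (pi (S p.2) b)) /\
  (forall h g b, \sum_(p <- delta g) pi h (pi (S p.1) (pi p.2 b))
               = \sum_(p <- delta g) pi (h * S p.1) (pi p.2 b)) /\
  (forall h g b, \sum_(p <- delta h) pi p.1 (pi (S p.2) (pi g b))
               = \sum_(p <- delta h) pi p.1 (pi (S p.2 * g) b)) /\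
  (forall h g b, \sum_(p <- delta h) pi (S p.1) (pi p.2 (pi g b))
               = \sum_(p <- delta h) pi (S p.1) (pi (p.2 * g) b)) /\
  (forall h b, pi h b = \sum_(p <- delta3l h) pi p.1.1 (pi (S p.1.2) (pi p.2 b))).

End WeakHopf.

(* Main.v *)
Require Import Defs.
From HB Require Import structures.
From mathcomp Require Import all_boot all_order all_algebra.
From mathcomp Require Import boolp classical_sets.
Set Implicit Arguments. Unset Strict Implicit. Unset Printing Implicit Defensive.
Import GRing.Theory.
Local Open Scope ring_scope.
Section Functional.
Variables (k : fieldType) (V : lmodType k).

Lemma sep_functional (d : V) : d != 0 ->
  exists phi : V -> k, (forall a x y, phi (a *: x + y) = a * phi x + phi y) /\ phi d = 1.
Proof.
move=> dn0.
pose P (W : set V) := (forall x y, W x -> W y -> W (x + y)) /\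
   (forall c x, W x -> W (c *: x)) /\ ~ W d.
have [W0 [[W0D [W0Z W0d]] W0max]] : exists A, P A /\ forall B, (A `<` B)%classic -> ~ P B.
  apply: Zorn_bigcup => F FP Ftot; split; [|split].
  - move=> x y [X FX Xx] [Y FY Yy].
    have [XY|YX] := Ftot X Y FX FY.
    + exists Y => //; have [+ _] := FP Y FY; apply => //; exact: XY.
    + exists X => //; have [+ _] := FP X FX; apply => //; exact: YX.
  - move=> c x [X FX Xx]; exists X => //; have [_ [+ _]] := FP X FX; exact.
  - by move=> [X FX Xd]; have [_ [_]] := FP X FX; apply.
pose Q w := W0 w \/ w = 0.
have QD : forall x y, Q x -> Q y -> Q (x + y).
  move=> x y [Wx|->] [Wy|->]; rewrite ?addr0 ?add0r; [left; exact: W0D|left|left|right] => //.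
have QZ : forall c x, Q x -> Q (c *: x).
  by move=> c x [Wx|->]; [left; exact: W0Z|right; rewrite scaler0].
have Qd : ~ Q d by case=> // /eqP; rewrite (negbTE dn0).
have rep : forall x, exists c, exists w, Q w /\ x = w + c *: d.
  move=> x; apply: contrapT => nx'.
  have nx : forall c w, Q w -> x <> w + c *: d by move=> c w Qw E; apply: nx'; exists c, w.
  pose B (y : V) := exists w c, Q w /\ y = w + c *: x.
  apply: (W0max B); first split.
    - move=> y W0y; exists y, 0; split; first by left.
      by rewrite scale0r addr0.
    - move=> BW; apply: (nx 0 x); last by rewrite scale0r addr0.
      left; apply: BW; exists 0, 1; split; [by right|by rewrite add0r scale1r].
  rewrite /P; split; [|split].
  - move=> y z [w [c [Qw ->]]] [w' [c' [Qw' ->]]]; exists (w + w'), (c + c'); split.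
      exact: QD.
    by rewrite scalerDl addrACA.
  - move=> a y [w [c [Qw ->]]]; exists (a *: w), (a * c); split; first exact: QZ.
    by rewrite scalerDr scalerA.
  - move=> [w [c [Qw dE]]].
    have [c0|cn0] := eqVneq c 0.
      by apply: Qd; move: dE; rewrite c0 scale0r addr0 => ->.
    apply: (nx c^-1 ((- c^-1) *: w)); first exact: QZ.
    have -> : d = w + c *: x by [].
    rewrite scalerDr scalerA mulVf // scale1r scaleNr addrA.
    by rewrite addNr add0r.
have uniq : forall c c' w w', Q w -> Q w' -> w + c *: d = w' + c' *: d -> c = c'.
  move=> c c' w w' Qw Qw' E; apply/eqP; rewrite -subr_eq0; apply/negP => /negP cn0.
  apply: (Qd).
  have -> : d = (c - c')^-1 *: (w' + (-1) *: w).
    apply: (@scalerI _ _ (c - c')) => //; rewrite scalerA mulfV // scale1r.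
    rewrite scalerBl scaleN1r; apply/eqP; rewrite subr_eq.
    by apply/eqP; rewrite addrAC -E addrAC subrr add0r.
  by apply: (QZ); apply: (QD) => //; apply: (QZ).
pose phi x := projT1 (cid (rep x)).
have phiP : forall x, exists w, Q w /\ x = w + phi x *: d.
  by move=> x; rewrite /phi; case: cid.
exists phi; split.
- move=> a x y; have [w [Qw xE]] := phiP x; have [w' [Qw' yE]] := phiP y.
  have [w'' [Qw'' E]] := phiP (a *: x + y).
  apply: (uniq _ _ w'' (a *: w + w')) => //; first by apply: QD => //; apply: QZ.
  rewrite -E {1}xE {1}yE scalerDl scalerDr scalerA.
  by rewrite addrACA.
- have [w [Qw E]] := phiP d.
  apply: sym_eq; apply: (uniq _ _ 0 w) => //; first by right.
  by rewrite -E add0r scale1r.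
Qed.
End Functional.
Section WH.
Variables (k : fieldType) (H : algType k).

Definition linH (V : lmodType k) (f : H -> V) :=
  forall a x y, f (a *: x + y) = a *: f x + f y.
Definition bil (V : lmodType k) (F : H -> H -> V) :=
  (forall x, linH (F x)) /\ (forall y, linH (fun x => F x y)).
Definition tril (V : lmodType k) (G : H -> H -> H -> V) :=
  [/\ (forall x y, linH (G x y)), (forall x z, linH (fun y => G x y z)) &
      (forall y z, linH (fun x => G x y z))].
Definition quad (V : lmodType k) (G : H -> H -> H -> H -> V) :=
  [/\ (forall x y z, linH (G x y z)), (forall x y w, linH (fun z => G x y z w)),
      (forall x z w, linH (fun y => G x y z w)) & (forall y z w, linH (fun x => G x y z w))].

Section LinFacts.
Variables (V : lmodType k) (f : H -> V).
Hypothesis fl : linH f.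
Lemma linH0 : f 0 = 0.
Proof. have E := fl 1 0 0; rewrite !scale1r addr0 in E. by apply: (addrI (f 0)); rewrite -E addr0. Qed.
Lemma linHD x y : f (x + y) = f x + f y.
Proof. by rewrite -{1}(scale1r x) fl scale1r. Qed.
Lemma linHZ a x : f (a *: x) = a *: f x.
Proof. by rewrite -(addr0 (a *: x)) fl linH0 addr0. Qed.
Lemma linH_sum I (r : seq I) (g : I -> H) : f (\sum_(i <- r) g i) = \sum_(i <- r) f (g i).
Proof.
elim: r => [|i r IH]; first by rewrite !big_nil linH0.
by rewrite !big_cons linHD IH.
Qed.
End LinFacts.

Lemma phi_sum (V : lmodType k) (phi : V -> k) I (r : seq I) (g : I -> V) :
  (forall a x y, phi (a *: x + y) = a * phi x + phi y) ->
  phi (\sum_(i <- r) g i) = \sum_(i <- r) phi (g i).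
Proof.
move=> pl.
have p0 : phi 0 = 0.
  have E := pl 1 0 0; rewrite !scale1r addr0 mul1r in E.
  by apply: (addrI (phi 0)); rewrite -E addr0.
elim: r => [|i r IH]; first by rewrite !big_nil.
by rewrite !big_cons -(scale1r (g i)) pl mul1r scale1r IH.
Qed.

Lemma phi_sub (V : lmodType k) (phi : V -> k) (x y : V) :
  (forall a x y, phi (a *: x + y) = a * phi x + phi y) -> phi (x - y) = phi x - phi y.
Proof. by move=> pl; rewrite addrC -scaleN1r pl mulN1r addrC. Qed.

Lemma teq2_V (s t : seq (H * H)) (V : lmodType k) (F : H -> H -> V) :
  teq2 s t -> bil F -> \sum_(p <- s) F p.1 p.2 = \sum_(p <- t) F p.1 p.2.
Proof.
move=> E [F2 F1]; apply/eqP; rewrite -subr_eq0; apply/negP => /negP dn0.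
have [phi [pl p1]] := sep_functional dn0.
have bf : bilinear_form (fun x y => phi (F x y)).
  by split=> y a x z /=; rewrite ?F2 ?F1 pl.
have := E _ bf; rewrite -!phi_sum // => E'.
by move: p1; rewrite phi_sub // E' subrr => /eqP; rewrite eq_sym oner_eq0.
Qed.

Lemma teq3_V (s t : seq (H * H * H)) (V : lmodType k) (G : H -> H -> H -> V) :
  teq3 s t -> tril G ->
  \sum_(p <- s) G p.1.1 p.1.2 p.2 = \sum_(p <- t) G p.1.1 p.1.2 p.2.
Proof.
move=> E [G3 G2 G1]; apply/eqP; rewrite -subr_eq0; apply/negP => /negP dn0.
have [phi [pl p1]] := sep_functional dn0.
have bf : trilinear_form (fun x y z => phi (G x y z)).
  split; [move=> x y a u v| split; [move=> x z a u v| move=> y z a u v]] => /=;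
  by rewrite ?G3 ?G2 ?G1 pl.
have := E _ bf; rewrite -!phi_sum // => E'.
by move: p1; rewrite phi_sub // E' subrr => /eqP; rewrite eq_sym oner_eq0.
Qed.

Lemma scalerAl' (R : lalgType k) (a : k) (x y : R) : a *: x * y = a *: (x * y).
Proof. by rewrite scalerAl. Qed.
Lemma scalerAr' (R : algType k) (a : k) (x y : R) : x * (a *: y) = a *: (x * y).
Proof. by rewrite scalerAr. Qed.
Lemma scalerA' (V : lmodType k) (a b : k) (v : V) : (a * b) *: v = a *: (b *: v).
Proof. by rewrite scalerA. Qed.
Lemma scalerCA' (V : lmodType k) (a b : k) (v : V) : b *: (a *: v) = a *: (b *: v).
Proof. by rewrite !scalerA mulrC. Qed.

Variables (delta : H -> seq (H * H)) (eps : H -> k) (S : H -> H).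
Hypothesis HW : is_weak_hopf delta eps S.

Definition D (V : lmodType k) (x : H) (F : H -> H -> V) := \sum_(p <- delta x) F p.1 p.2.

Lemma SlinH : linH S.
Proof. by case: HW => _ [_ [Sl _]]. Qed.
Lemma SD x y : S (x + y) = S x + S y. Proof. by have := linHD SlinH x y. Qed.
Lemma SZ a x : S (a *: x) = a *: S x. Proof. by have := linHZ SlinH a x. Qed.
Lemma S_sum I (r : seq I) g : S (\sum_(i <- r) g i) = \sum_(i <- r) S (g i).
Proof. by have := linH_sum SlinH r g. Qed.

Lemma epsL a x y : eps (a *: x + y) = a * eps x + eps y.
Proof. by case: HW => _ [el _]. Qed.
Lemma eps0 : eps 0 = 0.
Proof. have E := epsL 1 0 0; rewrite !scale1r addr0 mul1r in E.
  by apply: (addrI (eps 0)); rewrite -E addr0. Qed.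
Lemma epsD x y : eps (x + y) = eps x + eps y.
Proof. by rewrite -{1}(scale1r x) epsL mul1r. Qed.
Lemma epsZ a x : eps (a *: x) = a * eps x.
Proof. by rewrite -(addr0 (a *: x)) epsL eps0 addr0. Qed.

Section DV.
Variable V : lmodType k.
Implicit Types (F : H -> H -> V) (G : H -> H -> H -> V).

Lemma bil2 F : bil F -> forall x, linH (F x). Proof. by case. Qed.
Lemma bil1 F : bil F -> forall y, linH (fun x => F x y). Proof. by case. Qed.

Lemma D_lin F : bil F -> linH (fun x => D x F).
Proof.
move=> Fb a x y; have [Dl _] := HW.
rewrite /D (teq2_V (Dl a x y) Fb) big_cat big_map /= scaler_sumr; congr (_ + _).
by apply: eq_bigr => p _; rewrite (linHZ (bil1 Fb p.2)).
Qed.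

Lemma DD F x y : bil F -> D (x + y) F = D x F + D y F.
Proof. by move=> Fb; apply: (linHD (D_lin Fb)). Qed.
Lemma DZ F a x : bil F -> D (a *: x) F = a *: D x F.
Proof. by move=> Fb; apply: (linHZ (D_lin Fb)). Qed.
Lemma D_sum F I (r : seq I) g : bil F ->
  D (\sum_(i <- r) g i) F = \sum_(i <- r) D (g i) F.
Proof. by move=> Fb; apply: (linH_sum (D_lin Fb)). Qed.

Lemma delta3lE G h : \sum_(p <- delta3l delta h) G p.1.1 p.1.2 p.2 =
   \sum_(p <- delta h) \sum_(q <- delta p.1) G q.1 q.2 p.2.
Proof.
rewrite /delta3l big_flatten big_map /=; apply: eq_bigr => p _.
by rewrite big_map.
Qed.
Lemma delta3rE G h : \sum_(p <- delta3r delta h) G p.1.1 p.1.2 p.2 =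
   \sum_(p <- delta h) \sum_(q <- delta p.2) G p.1 q.1 q.2.
Proof.
rewrite /delta3r big_flatten big_map /=; apply: eq_bigr => p _.
by rewrite big_map.
Qed.

Lemma coass G h : tril G ->
  \sum_(p <- delta h) \sum_(q <- delta p.1) G q.1 q.2 p.2 =
  \sum_(p <- delta h) \sum_(q <- delta p.2) G p.1 q.1 q.2.
Proof.
move=> Gt; have [_ [_ [_ [ca _]]]] := HW.
by rewrite -delta3lE -delta3rE (teq3_V (ca h) Gt).
Qed.

Lemma D_mul F x y : bil F ->
  D (x * y) F = \sum_(p <- delta x) \sum_(q <- delta y) F (p.1 * q.1) (p.2 * q.2).
Proof.
move=> Fb; have [_ [_ [_ [_ [_ [_ [dm _]]]]]]] := HW.
by rewrite /D (teq2_V (dm x y) Fb) big_allpairs_dep.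
Qed.

Lemma unit1 G : tril G ->
  \sum_(p <- delta 1) \sum_(q <- delta p.1) G q.1 q.2 p.2 =
  \sum_(p <- delta 1) \sum_(q <- delta 1) G p.1 (q.1 * p.2) q.2.
Proof.
move=> Gt; have [_ [_ [_ [_ [_ [_ [_ [_ [_ [u1 _]]]]]]]]]] := HW.
by rewrite -delta3lE -(teq3_V (u1) Gt) big_allpairs_dep.
Qed.

Lemma unit2 G : tril G ->
  \sum_(p <- delta 1) \sum_(q <- delta p.1) G q.1 q.2 p.2 =
  \sum_(p <- delta 1) \sum_(q <- delta 1) G p.1 (p.2 * q.1) q.2.
Proof.
move=> Gt; have [_ [_ [_ [_ [_ [_ [_ [_ [_ [_ [u2 _]]]]]]]]]]] := HW.
by rewrite -delta3lE (teq3_V (u2) Gt) big_allpairs_dep.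
Qed.
End DV.

Lemma counitL h : \sum_(p <- delta h) eps p.1 *: p.2 = h.
Proof. by have [_ [_ [_ [_ [c _]]]]] := HW. Qed.
Lemma counitR h : \sum_(p <- delta h) eps p.2 *: p.1 = h.
Proof. by have [_ [_ [_ [_ [_ [c _]]]]]] := HW. Qed.
Lemma antiL h : \sum_(p <- delta h) p.1 * S p.2
             = \sum_(q <- delta 1) eps (q.1 * h) *: q.2.
Proof. by have [_ [_ [_ [_ [_ [_ [_ [_ [_ [_ [_ [c _]]]]]]]]]]]] := HW. Qed.
Lemma antiR h : \sum_(p <- delta h) S p.1 * p.2
             = \sum_(q <- delta 1) eps (h * q.2) *: q.1.
Proof. by have [_ [_ [_ [_ [_ [_ [_ [_ [_ [_ [_ [_ [c _]]]]]]]]]]]]] := HW. Qed.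
Lemma Sax h : S h = \sum_(p <- delta h) \sum_(q <- delta p.1) S q.1 * q.2 * S p.2.
Proof.
have [_ [_ [_ [_ [_ [_ [_ [_ [_ [_ [_ [_ [_ c]]]]]]]]]]]]] := HW.
by rewrite c (delta3lE (fun x y z => S x * y * S z)).
Qed.

Section BilRules.
Variable V : lmodType k.
Variable F : H -> H -> V.
Hypothesis Fb : bil F.
Lemma bilD2 x y z : F x (y + z) = F x y + F x z. Proof. exact: (linHD (bil2 Fb x)). Qed.
Lemma bilZ2 x a y : F x (a *: y) = a *: F x y. Proof. exact: (linHZ (bil2 Fb x)). Qed.
Lemma bilD1 x y z : F (x + y) z = F x z + F y z. Proof. exact: (linHD (bil1 Fb z)). Qed.
Lemma bilZ1 a x y : F (a *: x) y = a *: F x y. Proof. exact: (linHZ (bil1 Fb y)). Qed.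
Lemma bilS2 x I (r : seq I) g : F x (\sum_(i <- r) g i) = \sum_(i <- r) F x (g i).
Proof. exact: (linH_sum (bil2 Fb x)). Qed.
Lemma bilS1 y I (r : seq I) g : F (\sum_(i <- r) g i) y = \sum_(i <- r) F (g i) y.
Proof. exact: (linH_sum (bil1 Fb y)). Qed.
End BilRules.

Ltac lrw r := rewrite ?(r, mulrDl, mulrDr, scalerDl, scalerDr, scalerAl', scalerAr', scalerA', SD, SZ, epsD, epsZ) /=.

Ltac lin_core a r :=
  lrw r; rewrite ?(scalerCA' a); 
  first [ done
        | rewrite [in RHS]scaler_sumr -[in RHS]big_split /=; apply: eq_bigr => ? _; lin_core a r ].

Ltac lintac r := let a := fresh "a" in move=> a ? ? /=; lin_core a r.


Notation bilr Fb := (bilD2 Fb, bilZ2 Fb, bilD1 Fb, bilZ1 Fb).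

Definition epst x := \sum_(p <- delta x) p.1 * S p.2.
Definition epss x := \sum_(p <- delta x) S p.1 * p.2.

Section HopfV.
Variable V : lmodType k.
Implicit Types (F : H -> H -> V).

Lemma W1l F x : bil F ->
  D x F = \sum_(p <- delta 1) \sum_(q <- delta x) F (p.1 * q.1) (p.2 * q.2).
Proof. by move=> Fb; rewrite -{1}[x]mul1r D_mul. Qed.
Lemma W1r F x : bil F ->
  D x F = \sum_(p <- delta x) \sum_(q <- delta 1) F (p.1 * q.1) (p.2 * q.2).
Proof. by move=> Fb; rewrite -{1}[x]mulr1 D_mul. Qed.

Lemma W3 F x : bil F ->
  \sum_(p <- delta x) \sum_(r <- delta p.2) F p.1 (r.1 * S r.2) =
  \sum_(u <- delta 1) F (u.1 * x) u.2.
Proof.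
move=> Fb.
transitivity (\sum_(p <- delta x) \sum_(v <- delta 1) eps (v.1 * p.2) *: F p.1 v.2).
  apply: eq_bigr => p _; rewrite -(bilS2 Fb) antiL (bilS2 Fb).
  by apply: eq_bigr => v _; rewrite (bilZ2 Fb).
symmetry.
transitivity (\sum_(u <- delta 1) \sum_(a <- delta u.1) \sum_(q <- delta x)
                 eps (a.2 * q.2) *: F (a.1 * q.1) u.2).
  apply: eq_bigr => u _; rewrite -{1}(counitR (u.1 * x)) (bilS1 Fb).
  under eq_bigr do rewrite (bilZ1 Fb).
  rewrite -/(D (u.1 * x) (fun w1 w2 => eps w2 *: F w1 u.2)) D_mul //.
  by split=> *; lintac (bilr Fb).
rewrite (unit1 (G := fun y1 y2 y3 =>
    \sum_(q <- delta x) eps (y2 * q.2) *: F (y1 * q.1) y3)); last first.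
  by split=> *; lintac (bilr Fb).
rewrite exchange_big /= [RHS]exchange_big /=; apply: eq_bigr => v _.
under eq_bigr do under eq_bigr do rewrite -mulrA.
rewrite -(D_mul (F := fun c e => eps (v.1 * e) *: F c v.2)) ?mul1r //.
by split=> *; lintac (bilr Fb).
Qed.

End HopfV.
Lemma epst_lin : linH epst.
Proof.
have E x : epst x = D x (fun u v => u * S v) by [].
by move=> a x y; rewrite !E D_lin //; split=> *; lintac addr0.
Qed.
Lemma epss_lin : linH epss.
Proof.
have E x : epss x = D x (fun u v => S u * v) by [].
by move=> a x y; rewrite !E D_lin //; split=> *; lintac addr0.
Qed.
Lemma epstD x y : epst (x + y) = epst x + epst y. Proof. by have := linHD epst_lin x y. Qed.
Lemma epstZ a x : epst (a *: x) = a *: epst x. Proof. by have := linHZ epst_lin a x. Qed.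
Lemma epssD x y : epss (x + y) = epss x + epss y. Proof. by have := linHD epss_lin x y. Qed.
Lemma epssZ a x : epss (a *: x) = a *: epss x. Proof. by have := linHZ epss_lin a x. Qed.

Section TrilRules.
Variable V : lmodType k.
Variable G : H -> H -> H -> V.
Hypothesis Gt : tril G.
Lemma trilD3 x y u v : G x y (u + v) = G x y u + G x y v.
Proof. by case: Gt => g _ _; exact: (linHD (g x y)). Qed.
Lemma trilZ3 x y a u : G x y (a *: u) = a *: G x y u.
Proof. by case: Gt => g _ _; exact: (linHZ (g x y)). Qed.
Lemma trilD2 x y u v : G x (u + v) y = G x u y + G x v y.
Proof. by case: Gt => _ g _; exact: (linHD (g x y)). Qed.
Lemma trilZ2 x y a u : G x (a *: u) y = a *: G x u y.
Proof. by case: Gt => _ g _; exact: (linHZ (g x y)). Qed.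
Lemma trilD1 x y u v : G (u + v) x y = G u x y + G v x y.
Proof. by case: Gt => _ _ g; exact: (linHD (g x y)). Qed.
Lemma trilZ1 x y a u : G (a *: u) x y = a *: G u x y.
Proof. by case: Gt => _ _ g; exact: (linHZ (g x y)). Qed.
End TrilRules.
Notation trilr Gt := (trilD3 Gt, trilZ3 Gt, trilD2 Gt, trilZ2 Gt, trilD1 Gt, trilZ1 Gt).

Section QuadRules.
Variable V : lmodType k.
Variable G : H -> H -> H -> H -> V.
Hypothesis Gq : quad G.
Lemma quadD4 x y z u v : G x y z (u + v) = G x y z u + G x y z v.
Proof. by case: Gq => g _ _ _; exact: (linHD (g x y z)). Qed.
Lemma quadZ4 x y z a u : G x y z (a *: u) = a *: G x y z u.
Proof. by case: Gq => g _ _ _; exact: (linHZ (g x y z)). Qed.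
Lemma quadD3 x y z u v : G x y (u + v) z = G x y u z + G x y v z.
Proof. by case: Gq => _ g _ _; exact: (linHD (g x y z)). Qed.
Lemma quadZ3 x y z a u : G x y (a *: u) z = a *: G x y u z.
Proof. by case: Gq => _ g _ _; exact: (linHZ (g x y z)). Qed.
Lemma quadD2 x y z u v : G x (u + v) y z = G x u y z + G x v y z.
Proof. by case: Gq => _ _ g _; exact: (linHD (g x y z)). Qed.
Lemma quadZ2 x y z a u : G x (a *: u) y z = a *: G x u y z.
Proof. by case: Gq => _ _ g _; exact: (linHZ (g x y z)). Qed.
Lemma quadD1 x y z u v : G (u + v) x y z = G u x y z + G v x y z.
Proof. by case: Gq => _ _ _ g; exact: (linHD (g x y z)). Qed.
Lemma quadZ1 x y z a u : G (a *: u) x y z = a *: G u x y z.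
Proof. by case: Gq => _ _ _ g; exact: (linHZ (g x y z)). Qed.
End QuadRules.
Notation quadr Gq := (quadD4 Gq, quadZ4 Gq, quadD3 Gq, quadZ3 Gq, quadD2 Gq, quadZ2 Gq,
   quadD1 Gq, quadZ1 Gq).

Notation Dr Fb := (fun x y => DD x y Fb, fun a x => DZ a x Fb).

Section HopfV2.
Variable V : lmodType k.
Implicit Types (F : H -> H -> V).

Lemma B F x : bil F -> D (epst x) F = \sum_(u <- delta 1) F (u.1 * epst x) u.2.
Proof.
move=> Fb; rewrite /epst antiL D_sum //.
under eq_bigr do rewrite DZ // scaler_sumr.
rewrite -(coass (G := fun y1 y2 y3 => eps (y1 * x) *: F y2 y3)); last first.
  by split=> *; lintac (bilr Fb).
rewrite (unit1 (G := fun y1 y2 y3 => eps (y1 * x) *: F y2 y3)) /=; last first.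
  by split=> *; lintac (bilr Fb).
rewrite exchange_big /=; apply: eq_bigr => q _.
rewrite mulr_sumr (bilS1 Fb); apply: eq_bigr => p _.
by rewrite scalerAr' (bilZ1 Fb).
Qed.

Lemma B' F x : bil F -> D (epss x) F = \sum_(u <- delta 1) F u.1 (u.2 * epss x).
Proof.
move=> Fb; rewrite /epss antiR D_sum //.
under eq_bigr do rewrite DZ // scaler_sumr.
rewrite (unit2 (G := fun y1 y2 y3 => eps (x * y3) *: F y1 y2)) /=; last first.
  by split=> *; lintac (bilr Fb).
apply: eq_bigr => p _.
rewrite mulr_sumr (bilS2 Fb); apply: eq_bigr => q _.
by rewrite scalerAr' (bilZ2 Fb).
Qed.

Lemma Hsmul F y z : bil F ->
  D (y * epss z) F = \sum_(a <- delta y) F a.1 (a.2 * epss z).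
Proof.
move=> Fb; rewrite D_mul //.
transitivity (\sum_(a <- delta y) \sum_(u <- delta 1) F (a.1 * u.1) (a.2 * u.2 * epss z)).
  apply: eq_bigr => a _.
  have := B' (F := fun b1 b2 => F (a.1 * b1) (a.2 * b2)) z.
  rewrite /D /= => ->; last by split=> *; lintac (bilr Fb).
  by apply: eq_bigr => u _; rewrite mulrA.
by rewrite -(W1r (F := fun c e => F c (e * epss z)) y) //; split=> *; lintac (bilr Fb).
Qed.

Lemma Htmul F y z : bil F ->
  D (y * epst z) F = \sum_(a <- delta y) F (a.1 * epst z) a.2.
Proof.
move=> Fb; rewrite D_mul //.
transitivity (\sum_(a <- delta y) \sum_(u <- delta 1) F (a.1 * u.1 * epst z) (a.2 * u.2)).
  apply: eq_bigr => a _.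
  have := B (F := fun b1 b2 => F (a.1 * b1) (a.2 * b2)) z.
  rewrite /D /= => ->; last by split=> *; lintac (bilr Fb).
  by apply: eq_bigr => u _; rewrite mulrA.
by rewrite -(W1r (F := fun c e => F (c * epst z) e) y) //; split=> *; lintac (bilr Fb).
Qed.

Lemma W3' F x : bil F ->
  \sum_(p <- delta x) \sum_(q <- delta p.1) F (S q.1 * q.2) p.2 =
  \sum_(u <- delta 1) F u.1 (x * u.2).
Proof.
move=> Fb.
transitivity (\sum_(p <- delta x) \sum_(v <- delta 1) eps (p.1 * v.2) *: F v.1 p.2).
  apply: eq_bigr => p _; rewrite -(bilS1 Fb) antiR (bilS1 Fb).
  by apply: eq_bigr => v _; rewrite (bilZ1 Fb).
symmetry.
transitivity (\sum_(u <- delta 1) \sum_(a <- delta u.2) \sum_(q <- delta x)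
                 eps (q.1 * a.1) *: F u.1 (q.2 * a.2)).
  apply: eq_bigr => u _; rewrite -{1}(counitL (x * u.2)) (bilS2 Fb).
  under eq_bigr do rewrite (bilZ2 Fb).
  rewrite -/(D (x * u.2) (fun w1 w2 => eps w1 *: F u.1 w2)) D_mul //; last first.
    by split=> *; lintac (bilr Fb).
  by rewrite exchange_big.
rewrite -(coass (G := fun y1 y2 y3 =>
    \sum_(q <- delta x) eps (q.1 * y2) *: F y1 (q.2 * y3))); last first.
  by split=> *; lintac (bilr Fb).
rewrite (unit1 (G := fun y1 y2 y3 =>
    \sum_(q <- delta x) eps (q.1 * y2) *: F y1 (q.2 * y3))) /=; last first.
  by split=> *; lintac (bilr Fb).
rewrite [RHS]exchange_big /=; apply: eq_bigr => p _.
rewrite exchange_big /=.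
under eq_bigr do under eq_bigr do rewrite mulrA.
rewrite -(W1r (F := fun c e => eps (c * p.2) *: F p.1 e)) //.
by split=> *; lintac (bilr Fb).
Qed.

Lemma W3'1 F : bil F -> D 1 F = \sum_(p <- delta 1) F (epss p.1) p.2.
Proof.
move=> Fb; have := W3' 1 Fb; rewrite /D => E.
under [RHS]eq_bigr do rewrite /epss (bilS1 Fb).
by rewrite E; apply: eq_bigr => u _; rewrite mul1r.
Qed.

Lemma R4a (G : H -> H -> H -> H -> V) h : quad G ->
  \sum_(p <- delta h) \sum_(c <- delta p.1) \sum_(d <- delta p.2) G c.1 c.2 d.1 d.2 =
  \sum_(p <- delta h) \sum_(q <- delta p.1) \sum_(r <- delta q.2) G q.1 r.1 r.2 p.2.
Proof.
move=> Gq.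
under eq_bigr do rewrite exchange_big /=.
rewrite -(coass (G := fun y1 y2 y3 => \sum_(c <- delta y1) G c.1 c.2 y2 y3)); last first.
  split=> *; first (by lintac (quadr Gq)); first (by lintac (quadr Gq)).
  move=> a u v /=; rewrite -!/(D _ (fun c1 c2 => G c1 c2 _ _)).
  by rewrite D_lin //; split=> *; lintac (quadr Gq).
apply: eq_bigr => p _.
by rewrite (coass (G := fun y1 y2 y3 => G y1 y2 y3 p.2)) //; split=> *; lintac (quadr Gq).
Qed.

Lemma R4b (G : H -> H -> H -> H -> V) h : quad G ->
  \sum_(p <- delta h) \sum_(q <- delta p.2) \sum_(d <- delta q.2) G p.1 q.1 d.1 d.2 =
  \sum_(e <- delta h) \sum_(q <- delta e.1) \sum_(d <- delta e.2) G q.1 q.2 d.1 d.2.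
Proof.
move=> Gq.
rewrite -(coass (G := fun y1 y2 y3 => \sum_(d <- delta y3) G y1 y2 d.1 d.2)) //.
split=> *; first last; first (by lintac (quadr Gq)); first (by lintac (quadr Gq)).
move=> a u v /=; rewrite -!/(D _ (fun c1 c2 => G _ _ c1 c2)).
by rewrite D_lin //; split=> *; lintac (quadr Gq).
Qed.

Lemma DR F x : bil F -> D (epst x) F =
  \sum_(p <- delta x) \sum_(c <- delta p.1) \sum_(d <- delta p.2) F (c.1 * S d.2) (c.2 * S d.1).
Proof.
move=> Fb.
rewrite (R4a (G := fun y1 y2 y3 y4 => F (y1 * S y4) (y2 * S y3))); last first.
  by split=> *; lintac (bilr Fb).
rewrite B //.
transitivity (\sum_(p <- delta x) \sum_(u <- delta 1) F (u.1 * p.1 * S p.2) u.2).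
  rewrite exchange_big; apply: eq_bigr => u _; rewrite /epst mulr_sumr (bilS1 Fb).
  by apply: eq_bigr => p _; rewrite mulrA.
apply: eq_bigr => p _; symmetry.
by apply: (W3 (F := fun a c => F (a * S p.2) c)); split=> *; lintac (bilr Fb).
Qed.

Lemma F1 F h : bil F -> D (S h) F =
  \sum_(u <- delta 1) \sum_(p <- delta h) F (u.1 * S p.2) (u.2 * S p.1).
Proof.
move=> Fb.
have Kb : forall y3 y4, bil (fun w1 w2 => F (w1 * S y4) (w2 * S y3)).
  by move=> y3 y4; split=> *; lintac (bilr Fb).
rewrite Sax D_sum //.
under eq_bigr do rewrite D_sum //.
rewrite (coass (G := fun y1 y2 y3 => D (S y1 * y2 * S y3) F)); last first.
  by split=> *; lintac (bilr Fb, Dr Fb).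
transitivity (\sum_(p <- delta h) D (S p.1 * epst p.2) F).
  apply: eq_bigr => p _; rewrite /epst mulr_sumr D_sum //.
  by apply: eq_bigr => r _; rewrite mulrA.
transitivity (\sum_(p <- delta h) \sum_(a <- delta (S p.1)) \sum_(p' <- delta p.2)
   \sum_(c <- delta p'.1) \sum_(d <- delta p'.2) F (a.1 * (c.1 * S d.2)) (a.2 * (c.2 * S d.1))).
  apply: eq_bigr => p _; rewrite D_mul //; apply: eq_bigr => a _.
  have := DR (F := fun b1 b2 => F (a.1 * b1) (a.2 * b2)) p.2.
  by rewrite /D /= => ->; last by split=> *; lintac (bilr Fb).
transitivity (\sum_(p <- delta h) \sum_(p' <- delta p.2) \sum_(d <- delta p'.2)
   D (S p.1 * p'.1) (fun w1 w2 => F (w1 * S d.2) (w2 * S d.1))).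
  apply: eq_bigr => p _; rewrite exchange_big /=; apply: eq_bigr => p' _.
  under eq_bigr do rewrite exchange_big /=.
  rewrite exchange_big /=; apply: eq_bigr => d _.
  rewrite D_mul /=; last exact: Kb.
  by apply: eq_bigr => a _; apply: eq_bigr => c _; rewrite !mulrA.
rewrite (R4b (G := fun y1 y2 y3 y4 => D (S y1 * y2) (fun w1 w2 => F (w1 * S y4) (w2 * S y3))));
  last first.
  split.
  - by move=> *; rewrite /D; lintac (bilr Fb).
  - by move=> *; rewrite /D; lintac (bilr Fb).
  - by move=> y1 y3 y4; move=> a u v /=; rewrite mulrDr scalerAr' DD ?DZ //; exact: Kb.
  - by move=> y2 y3 y4; move=> a u v /=; rewrite SD SZ mulrDl scalerAl' DD ?DZ //; exact: Kb.
transitivity (\sum_(e <- delta h) \sum_(d <- delta e.2)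
   D (epss e.1) (fun w1 w2 => F (w1 * S d.2) (w2 * S d.1))).
  apply: eq_bigr => e _; rewrite exchange_big /=; apply: eq_bigr => d _.
  by rewrite /epss D_sum //; exact: Kb.
transitivity (\sum_(e <- delta h) \sum_(d <- delta e.2) \sum_(u <- delta 1)
   F (u.1 * S d.2) (u.2 * epss e.1 * S d.1)).
  by apply: eq_bigr => e _; apply: eq_bigr => d _; rewrite B' //; exact: Kb.
rewrite -(coass (G := fun y1 y2 y3 => \sum_(u <- delta 1) F (u.1 * S y3) (u.2 * epss y1 * S y2)));
  last by split=> *; lintac (bilr Fb, epssD, epssZ).
rewrite [RHS]exchange_big /=; apply: eq_bigr => e _.
rewrite exchange_big /=; apply: eq_bigr => u _.
rewrite [in RHS](Sax e.1) mulr_sumr (bilS2 Fb); apply: eq_bigr => f _.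
by rewrite /epss -mulrA mulr_suml.
Qed.

Lemma F1' F x g : bil F -> D (x * S g) F =
  \sum_(a <- delta x) \sum_(p <- delta g) F (a.1 * S p.2) (a.2 * S p.1).
Proof.
move=> Fb; rewrite D_mul //.
transitivity (\sum_(a <- delta x) \sum_(u <- delta 1) \sum_(p <- delta g)
   F (a.1 * u.1 * S p.2) (a.2 * u.2 * S p.1)).
  apply: eq_bigr => a _.
  have := F1 (F := fun b1 b2 => F (a.1 * b1) (a.2 * b2)) g.
  rewrite /D /= => ->; last by split=> *; lintac (bilr Fb).
  by under eq_bigr do under eq_bigr do rewrite !mulrA.
rewrite -(W1r (F := fun c e => \sum_(p <- delta g) F (c * S p.2) (e * S p.1)) x) //.
by split=> *; lintac (bilr Fb).
Qed.

End HopfV2.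
Section Act.
Variables (A : algType k) (act : H -> A -> A).
Hypothesis HM : is_sym_partial_module_algebra delta act.

Lemma act_lin1 b : linH (fun x => act x b).
Proof. by case: HM => l _ a x y; apply: l. Qed.
Lemma actD1 x y b : act (x + y) b = act x b + act y b.
Proof. by have := linHD (act_lin1 b) x y. Qed.
Lemma actZ1 a x b : act (a *: x) b = a *: act x b.
Proof. by have := linHZ (act_lin1 b) a x. Qed.
Lemma act_sum1 b I (r : seq I) g : act (\sum_(i <- r) g i) b = \sum_(i <- r) act (g i) b.
Proof. by have := linH_sum (act_lin1 b) r g. Qed.

Lemma act_lin2 h a b c : act h (a *: b + c) = a *: act h b + act h c.
Proof. by case: HM => _ [l _]; apply: l. Qed.
Lemma act02 h : act h 0 = 0.
Proof. have E := act_lin2 h 1 0 0; rewrite !scale1r addr0 in E.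
  by apply: (addrI (act h 0)); rewrite -E addr0. Qed.
Lemma actD2 h b c : act h (b + c) = act h b + act h c.
Proof. by rewrite -{1}(scale1r b) act_lin2 scale1r. Qed.
Lemma actZ2 h a b : act h (a *: b) = a *: act h b.
Proof. by rewrite -(addr0 (a *: b)) act_lin2 act02 addr0. Qed.
Lemma act_sum2 h I (r : seq I) (g : I -> A) :
  act h (\sum_(i <- r) g i) = \sum_(i <- r) act h (g i).
Proof.
elim: r => [|i r IH]; first by rewrite !big_nil act02.
by rewrite !big_cons actD2 IH.
Qed.

Definition actr := (actD1, actZ1, actD2, actZ2).

Lemma actM h a b : act h (a * b) = D h (fun x y => act x a * act y b).
Proof. by case: HM => _ [_ [m _]]; apply: m. Qed.
Lemma act1 b : act 1 b = b.
Proof. by case: HM => _ [_ [_ [u _]]]; apply: u. Qed.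
Lemma actL h g b : act h (act g b) = D h (fun x y => act x 1 * act (y * g) b).
Proof. by case: HM => _ [_ [_ [_ [l _]]]]; apply: l. Qed.
Lemma actR h g b : act h (act g b) = D h (fun x y => act (x * g) b * act y 1).
Proof. by case: HM => _ [_ [_ [_ [_ r]]]]; apply: r. Qed.

Lemma D1 h b : act h b = D h (fun x y => act x 1 * act y b).
Proof. by rewrite -{1}[b]mul1r actM. Qed.

Lemma Plemma z x c :
  D z (fun z1 z2 => act (z1 * x) 1 * act z2 c) = act z (act x 1 * c).
Proof.
rewrite actM /D.
transitivity (\sum_(p <- delta z) \sum_(w <- delta p.2)
   act (p.1 * x) 1 * act w.1 1 * act w.2 c).
  apply: eq_bigr => p _; rewrite [act p.2 c]D1 /D mulr_sumr.
  by apply: eq_bigr => w _; rewrite mulrA.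
rewrite -(coass (G := fun y1 y2 y3 => act (y1 * x) 1 * act y2 1 * act y3 c)); last first.
  by split=> *; lintac actr.
by apply: eq_bigr => p _; rewrite -mulr_suml (actR p.1 x 1).
Qed.

Lemma Hsact z g b : act (epss z) (act g b) = act (epss z * g) b.
Proof.
rewrite actL B' /=; last by split=> *; lintac actr.
rewrite -[RHS]act1 actL /D; apply: eq_bigr => u _.
by rewrite mulrA.
Qed.

Section PhiLin.
Variable Phi : H -> A.
Hypothesis Phil : linH Phi.
Notation phir := (linHD Phil, linHZ Phil).

Lemma Kgen x :
  \sum_(q <- delta x) \sum_(c <- delta q.1) act c.1 1 * Phi (c.2 * S q.2) =
  \sum_(u <- delta 1) act (u.1 * x) 1 * Phi u.2.
Proof.
rewrite (coass (G := fun y1 y2 y3 => act y1 1 * Phi (y2 * S y3))); last first.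
  by split=> *; lintac (actr, phir).
by rewrite (W3 (F := fun a c => act a 1 * Phi c)) //; split=> *; lintac (actr, phir).
Qed.

Lemma Tgen x g :
  \sum_(p <- delta g) D (x * S p.1) (fun w1 w2 => Phi (w1 * p.2) * act w2 1) =
  D x (fun a1 a2 => \sum_(p <- delta g) Phi (a1 * epss p.2) * act (a2 * S p.1) 1).
Proof.
transitivity (\sum_(p <- delta g) \sum_(a <- delta x) \sum_(q <- delta p.1)
   Phi (a.1 * S q.2 * p.2) * act (a.2 * S q.1) 1).
  by apply: eq_bigr => p _; rewrite F1' //; split=> *; lintac (actr, phir).
rewrite exchange_big /D; apply: eq_bigr => a _.
rewrite (coass (G := fun y1 y2 y3 => Phi (a.1 * S y2 * y3) * act (a.2 * S y1) 1)); last first.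
  by split=> *; lintac (actr, phir).
apply: eq_bigr => p _; rewrite -mulr_suml; congr (_ * _).
rewrite /epss mulr_sumr (linH_sum Phil); apply: eq_bigr => r _.
by rewrite mulrA.
Qed.
End PhiLin.

Lemma lin_actY Y : linH (fun y => act y Y).
Proof. exact: act_lin1. Qed.
Lemma lin_actg g b : linH (fun y => act (y * g) b).
Proof. by move=> a x y; rewrite mulrDl scalerAl' actD1 actZ1. Qed.

Lemma Kact x Y : \sum_(q <- delta x) act q.1 (act (S q.2) Y) =
  \sum_(u <- delta 1) act (u.1 * x) 1 * act u.2 Y.
Proof.
rewrite -(Kgen (lin_actY Y)); apply: eq_bigr => q _.
by rewrite actL.
Qed.

Lemma Kact2 x g b : \sum_(q <- delta x) act q.1 (act (S q.2 * g) b) =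
  \sum_(u <- delta 1) act (u.1 * x) 1 * act (u.2 * g) b.
Proof.
rewrite -(Kgen (lin_actg g b)); apply: eq_bigr => q _.
by rewrite actL /D; apply: eq_bigr => c _; rewrite mulrA.
Qed.

Lemma PR2 h g b : \sum_(p <- delta g) act h (act p.1 (act (S p.2) b))
               = \sum_(p <- delta g) act (h * p.1) (act (S p.2) b).
Proof.
have P1 : \sum_(u <- delta 1) act (u.1 * g) 1 * act u.2 b = act g 1 * b.
  by rewrite -[RHS]act1 -Plemma.
rewrite -act_sum2 Kact P1 -Plemma.
transitivity (\sum_(a <- delta h) \sum_(u <- delta 1) act (a.1 * u.1 * g) 1 * act (a.2 * u.2) b).
  rewrite (W1r (F := fun c e => act (c * g) 1 * act e b) h) //.
  by split=> *; lintac actr.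
symmetry.
transitivity (\sum_(p <- delta g) \sum_(a <- delta h) \sum_(q <- delta p.1)
   act (a.1 * q.1) 1 * act (a.2 * q.2 * S p.2) b).
  by apply: eq_bigr => p _; rewrite actL D_mul //; split=> *; lintac actr.
rewrite exchange_big /=; apply: eq_bigr => a _.
rewrite (coass (G := fun y1 y2 y3 => act (a.1 * y1) 1 * act (a.2 * y2 * S y3) b)); last first.
  by split=> *; lintac actr.
transitivity (\sum_(p <- delta g) \sum_(q <- delta p.2)
   act (a.1 * p.1) 1 * act (a.2 * (q.1 * S q.2)) b).
  by apply: eq_bigr => p _; apply: eq_bigr => q _; rewrite mulrA.
rewrite (W3 (F := fun c e => act (a.1 * c) 1 * act (a.2 * e) b)); last first.
  by split=> *; lintac actr.
by apply: eq_bigr => u _; rewrite !mulrA.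
Qed.

Lemma PR3 h g b : \sum_(p <- delta g) act h (act (S p.1) (act p.2 b))
               = \sum_(p <- delta g) act (h * S p.1) (act p.2 b).
Proof.
have TE : forall x, \sum_(p <- delta g) act (x * S p.1) (act p.2 b) =
   D x (fun a1 a2 => \sum_(p <- delta g) act (a1 * epss p.2) b * act (a2 * S p.1) 1).
  by move=> x; rewrite -(Tgen (lin_actY b)); apply: eq_bigr => p _; rewrite actR.
rewrite TE.
transitivity (\sum_(c <- delta h) act c.1 1 * D c.2
   (fun a1 a2 => \sum_(p <- delta g) act (a1 * epss p.2) b * act (a2 * S p.1) 1)).
  under eq_bigr do rewrite actL.
  rewrite /D exchange_big /=; apply: eq_bigr => c _.
  by rewrite -mulr_sumr TE.
under eq_bigr do rewrite /D mulr_sumr.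
rewrite -(coass (G := fun y1 y2 y3 => act y1 1 *
   \sum_(p <- delta g) act (y2 * epss p.2) b * act (y3 * S p.1) 1)); last first.
  by split=> *; move=> aa ? ? /=; rewrite !mulr_sumr; lin_core aa (actr, epssD, epssZ).
apply: eq_bigr => c _.
under eq_bigr do rewrite mulr_sumr.
rewrite exchange_big /=; apply: eq_bigr => p _.
under eq_bigr do rewrite mulrA.
rewrite -mulr_suml; congr (_ * _).
rewrite [RHS]D1 Hsmul //; by split=> *; lintac actr.
Qed.

Lemma PR4 h g b : \sum_(p <- delta h) act p.1 (act (S p.2) (act g b))
               = \sum_(p <- delta h) act p.1 (act (S p.2 * g) b).
Proof.
rewrite Kact Kact2.
transitivity (\sum_(u <- delta 1) act u.1 (act h 1) * act (u.2 * g) b).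
  transitivity (\sum_(u <- delta 1) \sum_(w <- delta u.2)
     act (u.1 * h) 1 * act w.1 1 * act (w.2 * g) b).
    apply: eq_bigr => u _; rewrite actL /D mulr_sumr.
    by apply: eq_bigr => w _; rewrite mulrA.
  rewrite -(coass (G := fun y1 y2 y3 => act (y1 * h) 1 * act y2 1 * act (y3 * g) b)); last first.
    by split=> *; lintac actr.
  by apply: eq_bigr => u _; rewrite -mulr_suml (actR u.1 h 1).
transitivity (\sum_(p <- delta 1) act (epss p.1) (act h 1) * act (p.2 * g) b).
  apply: (W3'1 (F := fun c e => act c (act h 1) * act (e * g) b)).
  by split=> *; lintac actr.
under eq_bigr do rewrite Hsact.
symmetry; apply: (W3'1 (F := fun c e => act (c * h) 1 * act (e * g) b)).
by split=> *; lintac actr.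
Qed.

Lemma PR5 h g b : \sum_(p <- delta h) act (S p.1) (act p.2 (act g b))
               = \sum_(p <- delta h) act (S p.1) (act (p.2 * g) b).
Proof.
have E1 : \sum_(p <- delta h) act (S p.1) (act p.2 (act g b)) =
    D 1 (fun a1 a2 => \sum_(p <- delta h) act (a1 * epss p.2) (act g b) * act (a2 * S p.1) 1).
  rewrite -(Tgen (lin_actY (act g b))); apply: eq_bigr => p _.
  by rewrite actR mul1r.
have E2 : \sum_(p <- delta h) act (S p.1) (act (p.2 * g) b) =
    D 1 (fun a1 a2 => \sum_(p <- delta h) act (a1 * epss p.2 * g) b * act (a2 * S p.1) 1).
  rewrite -(Tgen (lin_actg g b)); apply: eq_bigr => p _.
  by rewrite actR mul1r /D; apply: eq_bigr => w _; rewrite mulrA.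
rewrite E1 E2 /D exchange_big [RHS]exchange_big /=; apply: eq_bigr => p _.
transitivity (\sum_(u <- delta 1) \sum_(a <- delta u.1)
   act a.1 1 * act (a.2 * epss p.2 * g) b * act (u.2 * S p.1) 1).
  apply: eq_bigr => u _; rewrite actL Hsmul /= ?mulr_suml //.
  by split=> *; lintac actr.
rewrite (unit2 (G := fun y1 y2 y3 =>
   act y1 1 * act (y2 * epss p.2 * g) b * act (y3 * S p.1) 1)); last first.
  by split=> *; lintac actr.
rewrite exchange_big /=; apply: eq_bigr => v _; rewrite -mulr_suml; congr (_ * _).
rewrite -[RHS]act1 actL /D; apply: eq_bigr => q _.
by rewrite !mulrA.
Qed.

Lemma PR6 h b : act h b =
  \sum_(p <- delta3l delta h) act p.1.1 (act (S p.1.2) (act p.2 b)).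
Proof.
rewrite (delta3lE (fun x y z => act x (act (S y) (act z b)))) /=.
rewrite [LHS]D1 /D; apply: eq_bigr => p _.
by rewrite Kact -[LHS]act1 -Plemma.
Qed.

End Act.
End WH.

Unset Implicit Arguments.
Theorem proposition3p5 (k : fieldType) (H : algType k)
    (delta : H -> seq (H * H)) (eps : H -> k) (S : H -> H)
    (A : algType k) (act : H -> A -> A) :
  is_weak_hopf delta eps S ->
  is_sym_partial_module_algebra delta act ->
  is_partial_rep_End delta S (fun h a => act h a).
Proof.
move=> HW HM; split; [|split; [|split; [|split; [|split; [|split; [|split]]]]]].
- by move=> h a b c; apply: (act_lin2 HM).
- by move=> a x y b; apply: (act_lin1 HM b a x y).
- exact: (act1 HM).
- exact: (PR2 HW HM).
- exact: (PR3 HW HM).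
- exact: (PR4 HW HM).
- exact: (PR5 HW HM).
- exact: (PR6 HW HM).
Qed.
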